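(* In the one-shot wage theft problem described in the context, fix an effort level $a\in[0,1)$ and let $(w_H^*,w_L^* )$ be the promised wages of an optimal solution of the problem restricted to effort level $a$. Then, with these wages and effort fixed, choosing thefts $b_i^*=\min\{\beta,w_i^*\}$ for $i\in\{H,L\}$ maximizes the employer's profit over all $b_H,b_L$ with $0\le b_i\le w_i^*$. Furthermore, if $a\in(0,1)$, then $b_i^*=\min\{\beta,w_i^*\}$, $i\in\{H,L\}$, is the unique optimal wage theft.
   Context: Fix $P>0$, $y_H>y_L\ge 0$, a real number $u$ (reservation utility) and $\gamma\in(0,1]$ (inspection probability). Let $C:[0,1)\to\mathbb{R}$ be the worker's effort cost: $C(0)=0$, $C$ increasing, strictly convex, twice differentiable, $C(a)\to\infty$ as $a\to1$. Let $\eta:[0,\infty)\to\mathbb{R}$ be the penalty: strictly convex, increasing, twice differentiable, $\eta(0)=0$. The one-shot wage theft problem is: choose $a,w_H,w_L,b_H,b_L$ to maximize the employer profit $a\,(Py_H-w_H+b_H-\gamma\eta(b_H))+(1-a)\,(Py_L-w_L+b_L-\gamma\eta(b_L))$ subject to (incentive compatibility) $a\in\arg\max_{a'\in[0,1)}\{a'w_H+(1-a')w_L-C(a')\}$; (individual rationality) $a w_H+(1-a)w_L-C(a)\ge u$; $w_H,w_L\ge 0$; $0\le b_L\le w_L$, $0\le b_H\le w_H$; $a\in[0,1)$. The problem restricted to effort level $a$ is the same problem with $a$ fixed. The principal's ideal wage theft $\beta\ge 0$ is the value with $\gamma\eta'(\beta)=1$ (assumed to exist). *)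

(* Defs.v *)
From Stdlib Require Import Reals Lra.
From Coquelicot Require Import Coquelicot.
Open Scope R_scope.

Definition is_derive_on (D : R -> Prop) (f f' : R -> R) : Prop :=
  forall x, D x ->
    filterlim (fun y => (f y - f x) / (y - x))
              (within (fun y => D y /\ y <> x) (locally x))
              (locally (f' x)).

Definition twice_diff_on (D : R -> Prop) (f : R -> R) : Prop :=
  exists f' f'', is_derive_on D f f' /\ is_derive_on D f' f''.

Definition nondecr_on (D : R -> Prop) (f : R -> R) : Prop :=
  forall x y, D x -> D y -> x <= y -> f x <= f y.

Definition strictly_convex_on (D : R -> Prop) (f : R -> R) : Prop :=
  forall x y t, D x -> D y -> x <> y -> 0 < t < 1 ->
    f (t * x + (1 - t) * y) < t * f x + (1 - t) * f y.

Definition dom_C (a : R) : Prop := 0 <= a < 1.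
Definition dom_eta (b : R) : Prop := 0 <= b.

Definition profit (P yH yL gamma : R) (eta : R -> R)
    (a wH wL bH bL : R) : R :=
  a * (P * yH - wH + bH - gamma * eta bH)
  + (1 - a) * (P * yL - wL + bL - gamma * eta bL).

Definition worker_util (C : R -> R) (a wH wL : R) : R :=
  a * wH + (1 - a) * wL - C a.

Definition IC (C : R -> R) (a wH wL : R) : Prop :=
  forall a', 0 <= a' < 1 -> worker_util C a' wH wL <= worker_util C a wH wL.

Definition feasible_at (u : R) (C : R -> R) (a wH wL bH bL : R) : Prop :=
  IC C a wH wL /\ worker_util C a wH wL >= u /\
  0 <= wH /\ 0 <= wL /\ 0 <= bL <= wL /\ 0 <= bH <= wH.

Definition optimal_at (P yH yL u gamma : R) (C eta : R -> R)
    (a wH wL bH bL : R) : Prop :=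
  feasible_at u C a wH wL bH bL /\
  forall wH' wL' bH' bL', feasible_at u C a wH' wL' bH' bL' ->
    profit P yH yL gamma eta a wH' wL' bH' bL'
      <= profit P yH yL gamma eta a wH wL bH bL.

(* Main.v *)
Require Import Defs.
From Stdlib Require Import Reals Lra.
From Coquelicot Require Import Coquelicot.
Open Scope R_scope.

Lemma ball_R (x e y : R) : ball x e y <-> Rabs (y - x) < e.
Proof.
  unfold ball; simpl; unfold AbsRing_ball, abs, minus, plus, opp; simpl.
  replace (y + - x) with (y - x) by ring. tauto.
Qed.

Lemma chord_r (f : R -> R) (hc : strictly_convex_on dom_eta f) p y z :
  0 <= p -> p < y -> y < z ->
  (f y - f p) / (y - p) < (f z - f p) / (z - p).
Proof.
  intros hp h1 h2.
  set (t := (z - y) / (z - p)).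
  assert (ht : 0 < t < 1).
  { unfold t; split.
    - apply Rdiv_lt_0_compat; lra.
    - apply (Rmult_lt_reg_r (z - p)); [lra|]. unfold Rdiv.
      rewrite Rmult_assoc, Rinv_l by lra. lra. }
  assert (hy : t * p + (1 - t) * z = y) by (unfold t; field; lra).
  pose proof (hc p z t hp ltac:(unfold dom_eta; lra) ltac:(lra) ht) as H.
  rewrite hy in H.
  assert (h1t : 1 - t = (y - p) / (z - p)) by (unfold t; field; lra).
  rewrite h1t in H.
  apply (Rmult_lt_reg_r (y - p)); [lra|].
  unfold Rdiv at 1. rewrite Rmult_assoc, Rinv_l by lra.
  replace ((f z - f p) / (z - p) * (y - p)) with ((y - p) / (z - p) * f z - (y-p)/(z-p) * f p) by (field; lra).
  replace (f p) with (t * f p + (y - p) / (z - p) * f p) at 1.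
  2:{ rewrite <- h1t. ring. }
  lra.
Qed.

Lemma chord_l (f : R -> R) (hc : strictly_convex_on dom_eta f) p y z :
  0 <= z -> z < y -> y < p ->
  (f z - f p) / (z - p) < (f y - f p) / (y - p).
Proof.
  intros hz h1 h2.
  set (t := (p - y) / (p - z)).
  assert (ht : 0 < t < 1).
  { unfold t; split.
    - apply Rdiv_lt_0_compat; lra.
    - apply (Rmult_lt_reg_r (p - z)); [lra|]. unfold Rdiv.
      rewrite Rmult_assoc, Rinv_l by lra. lra. }
  assert (hy : t * z + (1 - t) * p = y) by (unfold t; field; lra).
  pose proof (hc z p t hz ltac:(unfold dom_eta; lra) ltac:(lra) ht) as H.
  rewrite hy in H.
  assert (H2 : f y - f p < t * (f z - f p)) by lra.
  replace ((f z - f p) / (z - p)) with ((f z - f p) / (p - z) * (-1)) by (field; lra).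
  replace ((f y - f p) / (y - p)) with ((f p - f y) / (p - y)) by (field; lra).
  unfold t in H2.
  assert (H3 : (f p - f y) / (p - y) > (f p - f z) / (p - z)).
  { apply Rlt_gt. apply (Rmult_lt_reg_r (p - y)); [lra|].
    unfold Rdiv at 2. rewrite Rmult_assoc, Rinv_l by lra.
    replace ((f p - f z) / (p - z) * (p - y)) with ((p - y) / (p - z) * (f p - f z)) by (field; lra).
    lra. }
  replace ((f z - f p) / (p - z) * -1) with ((f p - f z) / (p - z)) by (field; lra).
  lra.
Qed.

Lemma support (f d : R -> R) (hc : strictly_convex_on dom_eta f)
  (hd : is_derive_on dom_eta f d) p x :
  0 <= p -> 0 <= x -> x <> p -> f x > f p + d p * (x - p).
Proof.
  intros hp hx hxp.
  pose proof (hd p hp) as L0.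
  assert (L : forall eps : posreal, within (fun y => dom_eta y /\ y <> p) (locally p)
     (fun y => ball (d p) eps ((f y - f p) / (y - p)))).
  { intros eps. apply L0. apply locally_ball. }
  clear L0.
  set (q := fun y => (f y - f p) / (y - p)) in *.
  destruct (Rlt_or_le p x) as [hlt|hle].
  - set (m := (p + x) / 2).
    assert (hq1 : q m < q x) by (unfold q; apply (chord_r f hc); unfold m; lra).
    destruct (Rlt_or_le (d p) (q x)) as [hgt|hle2].
    + unfold q in hgt.
      apply (Rmult_lt_compat_r (x - p)) in hgt; [|lra].
      unfold Rdiv in hgt. rewrite Rmult_assoc, Rinv_l in hgt by lra. lra.
    + exfalso.
      assert (he : 0 < d p - q m) by lra.
      specialize (L (mkposreal _ he)).
      destruct L as [[del hdel] Hd]. simpl in Hd.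
      set (y := p + Rmin (del / 2) (m - p)).
      assert (hy1 : 0 < Rmin (del/2) (m - p)) by (apply Rmin_glb_lt; unfold m; lra).
      assert (hy2 : Rmin (del/2) (m - p) <= m - p) by apply Rmin_r.
      assert (hy3 : Rmin (del/2) (m - p) <= del/2) by apply Rmin_l.
      assert (hb : ball p del y) by (apply ball_R; unfold y; rewrite Rabs_right; lra).
      assert (hD : dom_eta y /\ y <> p) by (unfold dom_eta, y; split; [lra | intro; lra]).
      specialize (Hd y hb hD).
      apply ball_R in Hd.
      assert (hqy : q y <= q m).
      { destruct (Rle_lt_or_eq_dec _ _ hy2) as [hs|he2].
        - left. unfold q. apply (chord_r f hc); unfold y; lra.
        - unfold y; rewrite he2; replace (p + (m - p)) with m by ring; lra. }
      fold q in Hd.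
      apply Rabs_def2 in Hd. unfold minus, plus, opp in Hd; simpl in Hd. assert (hQ : q y = (f y - f p) / (y - p)) by reflexivity. lra.
  - assert (hlt : x < p) by lra.
    set (m := (p + x) / 2).
    assert (hq1 : q x < q m) by (unfold q; apply (chord_l f hc); unfold m; lra).
    destruct (Rlt_or_le (q x) (d p)) as [hgt|hle2].
    + unfold q in hgt.
      apply (Rmult_lt_compat_r (p - x)) in hgt; [|lra].
      replace ((f x - f p) / (x - p) * (p - x)) with (f p - f x) in hgt by (field; lra).
      lra.
    + exfalso.
      assert (he : 0 < q m - d p) by lra.
      specialize (L (mkposreal _ he)).
      destruct L as [[del hdel] Hd]. simpl in Hd.
      set (y := p - Rmin (del / 2) (p - m)).
      assert (hy1 : 0 < Rmin (del/2) (p - m)) by (apply Rmin_glb_lt; unfold m; lra).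
      assert (hy2 : Rmin (del/2) (p - m) <= p - m) by apply Rmin_r.
      assert (hy3 : Rmin (del/2) (p - m) <= del/2) by apply Rmin_l.
      assert (hb : ball p del y).
      { apply ball_R; unfold y. replace (p - Rmin (del / 2) (p - m) - p) with (- Rmin (del / 2) (p - m)) by ring.
        rewrite Rabs_Ropp, Rabs_right; lra. }
      assert (hD : dom_eta y /\ y <> p) by (unfold dom_eta, y, m in *; split; [lra | intro; lra]).
      specialize (Hd y hb hD).
      apply ball_R in Hd.
      assert (hqy : q m <= q y).
      { destruct (Rle_lt_or_eq_dec _ _ hy2) as [hs|he2].
        - left. unfold q. apply (chord_l f hc); unfold y, m in *; lra.
        - unfold y; rewrite he2; replace (p - (p - m)) with m by ring; lra. }
      fold q in Hd.
      apply Rabs_def2 in Hd. unfold minus, plus, opp in Hd; simpl in Hd. assert (hQ : q y = (f y - f p) / (y - p)) by reflexivity. lra.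
Qed.

Lemma gmax (gamma beta : R) (eta deta : R -> R) (hg : 0 < gamma)
  (hc : strictly_convex_on dom_eta eta) (hd : is_derive_on dom_eta eta deta)
  (hbeta : 0 <= beta) (hb1 : gamma * deta beta = 1) w x :
  0 <= w -> 0 <= x <= w -> x <> Rmin beta w ->
  x - gamma * eta x < Rmin beta w - gamma * eta (Rmin beta w).
Proof.
  intros hw hx hne.
  assert (Hs : forall z, 0 <= z -> z <> beta -> z - gamma * eta z < beta - gamma * eta beta).
  { intros z hz hzb. pose proof (support eta deta hc hd beta z hbeta hz hzb) as S.
    apply (Rmult_lt_compat_l gamma) in S; [|lra].
    rewrite Rmult_plus_distr_l, <- Rmult_assoc, hb1 in S. lra. }
  unfold Rmin in *. destruct (Rle_dec beta w) as [hbw|hbw].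
  - apply Hs; lra.
  - assert (hxw : x < w) by lra.
    set (t := (beta - w) / (beta - x)).
    assert (ht : 0 < t < 1).
    { unfold t; split.
      - apply Rdiv_lt_0_compat; lra.
      - apply (Rmult_lt_reg_r (beta - x)); [lra|]. unfold Rdiv.
        rewrite Rmult_assoc, Rinv_l by lra. lra. }
    assert (hy : t * x + (1 - t) * beta = w) by (unfold t; field; lra).
    pose proof (hc x beta t ltac:(unfold dom_eta; lra) hbeta ltac:(lra) ht) as H.
    rewrite hy in H.
    pose proof (Hs x ltac:(lra) ltac:(lra)) as H2.
    assert (H3 : (1 - t) * (x - gamma * eta x) < (1 - t) * (beta - gamma * eta beta))
      by (apply Rmult_lt_compat_l; lra).
    assert (H4 : gamma * eta w < gamma * (t * eta x + (1 - t) * eta beta))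
      by (apply Rmult_lt_compat_l; lra).
    assert (H5 : w - gamma * eta w > t * (x - gamma * eta x) + (1 - t) * (beta - gamma * eta beta)).
    { rewrite <- hy at 1. replace (t * (x - gamma * eta x) + (1 - t) * (beta - gamma * eta beta))
        with (t * x + (1 - t) * beta - gamma * (t * eta x + (1 - t) * eta beta)) by ring.
      lra. }
    replace (x - gamma * eta x) with (t * (x - gamma * eta x) + (1 - t) * (x - gamma * eta x)) at 1 by ring.
    lra.
Qed.

Theorem proposition1
  (P yH yL u gamma : R) (C eta deta : R -> R) (beta : R)
  (hP : 0 < P) (hy : yH > yL) (hyL : yL >= 0)
  (hgamma : 0 < gamma <= 1)
  (hC0 : C 0 = 0) (hCincr : nondecr_on dom_C C)
  (hCconv : strictly_convex_on dom_C C) (hCdiff : twice_diff_on dom_C C)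
  (hClim : filterlim C (at_left 1) (Rbar_locally p_infty))
  (heta0 : eta 0 = 0) (hetaincr : nondecr_on dom_eta eta)
  (hetaconv : strictly_convex_on dom_eta eta)
  (hdeta : is_derive_on dom_eta eta deta)
  (hdeta2 : exists eta'', is_derive_on dom_eta deta eta'')
  (hbeta : 0 <= beta) (hbeta1 : gamma * deta beta = 1)
  (a wH wL bH bL : R) (ha : 0 <= a < 1)
  (hopt : optimal_at P yH yL u gamma C eta a wH wL bH bL) :
  (forall bH' bL', 0 <= bH' <= wH -> 0 <= bL' <= wL ->
     profit P yH yL gamma eta a wH wL bH' bL'
       <= profit P yH yL gamma eta a wH wL (Rmin beta wH) (Rmin beta wL))
  /\
  (0 < a ->
   forall bH' bL', 0 <= bH' <= wH -> 0 <= bL' <= wL ->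
     (forall bH'' bL'', 0 <= bH'' <= wH -> 0 <= bL'' <= wL ->
        profit P yH yL gamma eta a wH wL bH'' bL''
          <= profit P yH yL gamma eta a wH wL bH' bL') ->
     bH' = Rmin beta wH /\ bL' = Rmin beta wL).
Proof.
  destruct hopt as [[_ [_ [hwH [hwL _]]]] _].
  set (g := fun b => b - gamma * eta b).
  assert (Hp : forall x y, profit P yH yL gamma eta a wH wL x y =
     a * (P * yH - wH) + (1 - a) * (P * yL - wL) + a * g x + (1 - a) * g y)
    by (intros; unfold profit, g; ring).
  assert (G : forall w x, 0 <= w -> 0 <= x <= w -> x <> Rmin beta w -> g x < g (Rmin beta w))
    by (intros; unfold g; eapply gmax; eauto; lra).
  assert (Gle : forall w x, 0 <= w -> 0 <= x <= w -> g x <= g (Rmin beta w)).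
  { intros w x hw hx. destruct (Req_dec x (Rmin beta w)) as [e|e].
    - rewrite e; lra. - left; auto. }
  assert (Mi : forall w, 0 <= w -> 0 <= Rmin beta w <= w).
  { intros w hw; split; [apply Rmin_glb; lra | apply Rmin_r]. }
  split.
  - intros x y hx hy'. rewrite !Hp.
    pose proof (Gle wH x hwH hx). pose proof (Gle wL y hwL hy').
    assert (0 <= a * (g (Rmin beta wH) - g x)) by (apply Rmult_le_pos; lra).
    assert (0 <= (1 - a) * (g (Rmin beta wL) - g y)) by (apply Rmult_le_pos; lra).
    lra.
  - intros hapos x y hx hy' Hmax. split.
    + destruct (Req_dec x (Rmin beta wH)) as [e|e]; auto. exfalso.
      pose proof (Hmax _ _ (Mi wH hwH) hy') as H. rewrite !Hp in H.
      pose proof (G wH x hwH hx e).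
      assert (0 < a * (g (Rmin beta wH) - g x)) by (apply Rmult_lt_0_compat; lra).
      lra.
    + destruct (Req_dec y (Rmin beta wL)) as [e|e]; auto. exfalso.
      pose proof (Hmax _ _ hx (Mi wL hwL)) as H. rewrite !Hp in H.
      pose proof (G wL y hwL hy' e).
      assert (0 < (1 - a) * (g (Rmin beta wL) - g y)) by (apply Rmult_lt_0_compat; lra).
      lra.
Qed.
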